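(* In any execution of the algorithm described in the context on a camera object $S$ and an associated versioned CAS object $O$: (1) before initTS is called on a VNode, $\mathit{VHead}$ has contained a pointer to that VNode; (2) after a complete execution of initTS on some VNode, that VNode's timestamp is valid.
   Context: Camera $S$ has an integer field timestamp, initially 0; takeSnapshot(): read $t:=S.\mathit{timestamp}$, perform CAS$(S.\mathit{timestamp},t,t+1)$, return $t$. A VNode has fields val and nextv (both immutable after creation) and ts (an integer or special value TBD, initially TBD). Versioned CAS object $O$ has a field $\mathit{VHead}$. Constructor with value $v$: $\mathit{VHead}:=$ new VNode(val $v$, nextv NULL); initTS($\mathit{VHead}$). initTS($n$): if $n.ts=$TBD, read $c:=S.\mathit{timestamp}$ and CAS$(n.ts,\mathrm{TBD},c)$. readSnapshot($ts$): $node:=\mathit{VHead}$; initTS($node$); while $node.ts>ts$, $node:=node.nextv$; return $node.val$. vRead(): $h:=\mathit{VHead}$; initTS($h$); return $h.val$. vCAS(oldV,newV): $h:=\mathit{VHead}$; initTS($h$); if $h.val\neq$ oldV return false; if newV $=$ oldV return true; $m:=$ new VNode(val newV, nextv $h$); if CAS$(\mathit{VHead},h,m)$ succeeds, initTS($m$) and return true; else delete $m$, call initTS on the current value of $\mathit{VHead}$, return false. A VNode's timestamp is valid in a configuration if its ts field is not TBD there, and invalid otherwise. *)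

(* Defs.v *)
(* Operational model of the camera object S and the versioned
   CAS object O, executed by an unbounded set of asynchronous processes
   (identified by nat) whose atomic shared-memory steps are interleaved
   arbitrarily.  Values stored in O are naturals; VNodes are identified by
   naturals (fresh identifiers, never reused); a ts field equal to [None]
   means TBD. *)
From Stdlib Require Import Arith.

Record VNode := mkVNode { val : nat; nextv : option nat; ts : option nat }.

(* What a process does after returning from a call to initTS. *)
Inductive Cont :=
| KCtor
| KRead (t : nat) (node : nat)           (* readSnapshot(t): enter the while loop at node *)
| KVRead
| KVCAS (h oldV newV : nat)              (* vCAS: continue with the comparisons *)
| KRetTrue                               (* vCAS after successful CAS: return true *)
| KFailRet.                              (* vCAS after failed CAS: return false *)

Inductive PC :=
| Idle
| TS_Read
| TS_CAS (t : nat)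
| Ctor_Alloc (v : nat)          (* VHead := new VNode(v, NULL) *)
| Ctor_ReadHead                 (* read VHead, call initTS on it *)
| RS_ReadHead (t : nat)
| RS_Loop (t : nat) (node : nat)
| VR_ReadHead
| VC_ReadHead (oldV newV : nat)
| VC_Check (h oldV newV : nat)
| VC_CAS (h m : nat)
| VC_FailRead
(* initTS(n), followed by continuation k *)
| IT_Check (n : nat) (k : Cont)
| IT_ReadTS (n : nat) (k : Cont)
| IT_CAS (n : nat) (c : nat) (k : Cont).

Inductive CtorStatus := CtorNotStarted | CtorRunning | CtorDone.

Record Config := mkConfig {
  timestamp : nat;
  vhead : option nat;              (* O.VHead (None before construction) *)
  heap : nat -> option VNode;
  next_id : nat;
  ctor : CtorStatus;
  pcs : nat -> PC
}.

Definition init_config : Config :=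
  mkConfig 0 None (fun _ => None) 0 CtorNotStarted (fun _ => Idle).

Definition upd {A} (f : nat -> A) (x : nat) (a : A) : nat -> A :=
  fun y => if Nat.eqb y x then a else f y.

Definition set_pc (C : Config) (p : nat) (pc : PC) : Config :=
  mkConfig (timestamp C) (vhead C) (heap C) (next_id C) (ctor C) (upd (pcs C) p pc).
Definition set_ts (C : Config) (t : nat) : Config :=
  mkConfig t (vhead C) (heap C) (next_id C) (ctor C) (pcs C).
Definition set_vhead (C : Config) (h : option nat) : Config :=
  mkConfig (timestamp C) h (heap C) (next_id C) (ctor C) (pcs C).
Definition set_heap (C : Config) (x : nat) (o : option VNode) : Config :=
  mkConfig (timestamp C) (vhead C) (upd (heap C) x o) (next_id C) (ctor C) (pcs C).
Definition alloc (C : Config) (nd : VNode) : Config :=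
  mkConfig (timestamp C) (vhead C) (upd (heap C) (next_id C) (Some nd))
           (S (next_id C)) (ctor C) (pcs C).
Definition set_ctor (C : Config) (s : CtorStatus) : Config :=
  mkConfig (timestamp C) (vhead C) (heap C) (next_id C) s (pcs C).

Definition resume (C : Config) (p : nat) (k : Cont) : Config :=
  match k with
  | KCtor => set_ctor (set_pc C p Idle) CtorDone
  | KRead t node => set_pc C p (RS_Loop t node)
  | KVRead => set_pc C p Idle
  | KVCAS h o n => set_pc C p (VC_Check h o n)
  | KRetTrue => set_pc C p Idle
  | KFailRet => set_pc C p Idle
  end.

(* "node.ts > t" ; a TBD timestamp is treated as not greater. *)
Definition ts_gt (o : option nat) (t : nat) : bool :=
  match o with Some u => Nat.ltb t u | None => false end.

Inductive step (p : nat) : Config -> Config -> Prop :=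
| st_inv_ctor C v : pcs C p = Idle -> ctor C = CtorNotStarted ->
    step p C (set_ctor (set_pc C p (Ctor_Alloc v)) CtorRunning)
| st_inv_ts C : pcs C p = Idle -> step p C (set_pc C p TS_Read)
| st_inv_rs C t : pcs C p = Idle -> ctor C = CtorDone ->
    step p C (set_pc C p (RS_ReadHead t))
| st_inv_vr C : pcs C p = Idle -> ctor C = CtorDone ->
    step p C (set_pc C p VR_ReadHead)
| st_inv_vc C o n : pcs C p = Idle -> ctor C = CtorDone ->
    step p C (set_pc C p (VC_ReadHead o n))
| st_ts_read C : pcs C p = TS_Read ->
    step p C (set_pc C p (TS_CAS (timestamp C)))
| st_ts_cas_ok C t : pcs C p = TS_CAS t -> timestamp C = t ->
    step p C (set_pc (set_ts C (S t)) p Idle)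
| st_ts_cas_fail C t : pcs C p = TS_CAS t -> timestamp C <> t ->
    step p C (set_pc C p Idle)
| st_ctor_alloc C v : pcs C p = Ctor_Alloc v ->
    step p C (set_pc (set_vhead (alloc C (mkVNode v None None)) (Some (next_id C)))
                     p Ctor_ReadHead)
| st_ctor_read C h : pcs C p = Ctor_ReadHead -> vhead C = Some h ->
    step p C (set_pc C p (IT_Check h KCtor))
| st_rs_read C t h : pcs C p = RS_ReadHead t -> vhead C = Some h ->
    step p C (set_pc C p (IT_Check h (KRead t h)))
| st_rs_next C t node nd m : pcs C p = RS_Loop t node -> heap C node = Some nd ->
    ts_gt (ts nd) t = true -> nextv nd = Some m ->
    step p C (set_pc C p (RS_Loop t m))
| st_rs_ret C t node nd : pcs C p = RS_Loop t node -> heap C node = Some nd ->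
    ts_gt (ts nd) t = false ->
    step p C (set_pc C p Idle)
| st_vr_read C h : pcs C p = VR_ReadHead -> vhead C = Some h ->
    step p C (set_pc C p (IT_Check h KVRead))
| st_vc_read C o n h : pcs C p = VC_ReadHead o n -> vhead C = Some h ->
    step p C (set_pc C p (IT_Check h (KVCAS h o n)))
| st_vc_neq C h o n nd : pcs C p = VC_Check h o n -> heap C h = Some nd ->
    val nd <> o -> step p C (set_pc C p Idle)
| st_vc_same C h o n nd : pcs C p = VC_Check h o n -> heap C h = Some nd ->
    val nd = o -> n = o -> step p C (set_pc C p Idle)
| st_vc_alloc C h o n nd : pcs C p = VC_Check h o n -> heap C h = Some nd ->
    val nd = o -> n <> o ->
    step p C (set_pc (alloc C (mkVNode n (Some h) None)) p (VC_CAS h (next_id C)))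
| st_vc_cas_ok C h m : pcs C p = VC_CAS h m -> vhead C = Some h ->
    step p C (set_pc (set_vhead C (Some m)) p (IT_Check m KRetTrue))
| st_vc_cas_fail C h m : pcs C p = VC_CAS h m -> vhead C <> Some h ->
    step p C (set_pc (set_heap C m None) p VC_FailRead)
| st_vc_failread C h : pcs C p = VC_FailRead -> vhead C = Some h ->
    step p C (set_pc C p (IT_Check h KFailRet))
| st_it_valid C n k nd c : pcs C p = IT_Check n k -> heap C n = Some nd ->
    ts nd = Some c -> step p C (resume C p k)
| st_it_tbd C n k nd : pcs C p = IT_Check n k -> heap C n = Some nd ->
    ts nd = None -> step p C (set_pc C p (IT_ReadTS n k))
| st_it_read C n k : pcs C p = IT_ReadTS n k ->
    step p C (set_pc C p (IT_CAS n (timestamp C) k))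
| st_it_cas_ok C n c k nd : pcs C p = IT_CAS n c k -> heap C n = Some nd ->
    ts nd = None ->
    step p (C) (resume (set_heap C n (Some (mkVNode (val nd) (nextv nd) (Some c)))) p k)
| st_it_cas_fail C n c k nd c' : pcs C p = IT_CAS n c k -> heap C n = Some nd ->
    ts nd = Some c' -> step p C (resume C p k).

Definition execution (E : nat -> Config) (len : nat) : Prop :=
  E 0 = init_config /\ forall i, i < len -> exists p, step p (E i) (E (S i)).

Definition in_initTS (pc : PC) (n : nat) : Prop :=
  match pc with
  | IT_Check m _ | IT_ReadTS m _ | IT_CAS m _ _ => m = n
  | _ => False
  end.

Definition ts_valid (C : Config) (n : nat) : Prop :=
  exists nd c, heap C n = Some nd /\ ts nd = Some c.

(* Main.v *)
Require Import Defs.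
From Stdlib Require Import Arith Lia.

Lemma pcs_other q C C' p : step q C C' -> p <> q -> pcs C' p = pcs C p.
Proof.
  intros Hs Hne.
  assert (E: Nat.eqb p q = false) by (apply Nat.eqb_neq; auto).
  destruct Hs; try destruct k; simpl; unfold upd; rewrite ?E; reflexivity.
Qed.

Lemma init_src q C C' p n : step q C C' -> in_initTS (pcs C' p) n ->
  in_initTS (pcs C p) n \/ vhead C = Some n \/ vhead C' = Some n.
Proof.
  intros Hs Hi.
  destruct (Nat.eq_dec p q) as [->|Hne].
  2:{ left. rewrite <- (pcs_other _ _ _ _ Hs Hne). exact Hi. }
  destruct Hs; try destruct k; simpl in *; unfold upd in *; rewrite Nat.eqb_refl in *;
    simpl in *; try contradiction; subst; auto;
    try (left; match goal with H : pcs _ _ = _ |- _ => rewrite H end; simpl; reflexivity).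
Qed.
Definition Inv C :=
 (forall x, next_id C <= x -> heap C x = None) /\
 (forall h, vhead C = Some h -> h < next_id C) /\
 (forall q h m, pcs C q = VC_CAS h m -> m < next_id C /\ vhead C <> Some m /\
    (forall nd, heap C m = Some nd -> ts nd = None) /\
    (forall q' h', pcs C q' = VC_CAS h' m -> q' = q) /\
    (forall q' n, in_initTS (pcs C q') n -> n <> m)) /\
 (forall q n, in_initTS (pcs C q) n -> n < next_id C).

Lemma Inv_init : Inv init_config.
Proof. repeat split; simpl; intros; try discriminate; try contradiction. Qed.

Ltac eqbs := repeat match goal with
  | |- context [Nat.eqb ?a ?b] => destruct (Nat.eqb_spec a b)
  | H : context [Nat.eqb ?a ?b] |- _ => destruct (Nat.eqb_spec a b)
  end.

Ltac prep Hc :=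
  repeat match goal with
  | H : pcs _ ?q = VC_CAS ?h ?m |- _ =>
      let P := type of (Hc _ _ _ H) in
      lazymatch goal with _ : P |- _ => fail | _ => pose proof (Hc _ _ _ H) end
  end;
  repeat match goal with H : _ /\ _ |- _ => destruct H end.

Ltac injs := repeat match goal with
  | H : Some _ = Some _ |- _ => injection H as H
  | H : @eq PC _ _ |- _ => injection H; clear H; intros
  end; subst.

Ltac itp Hd := repeat match goal with
  | H : pcs ?C ?q = IT_Check ?n _ |- _ =>
     lazymatch goal with _ : in_initTS (pcs C q) n |- _ => fail | _ =>
     assert (in_initTS (pcs C q) n) by (rewrite H; reflexivity) end
  | H : pcs ?C ?q = IT_ReadTS ?n _ |- _ =>
     lazymatch goal with _ : in_initTS (pcs C q) n |- _ => fail | _ =>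
     assert (in_initTS (pcs C q) n) by (rewrite H; reflexivity) end
  | H : pcs ?C ?q = IT_CAS ?n _ _ |- _ =>
     lazymatch goal with _ : in_initTS (pcs C q) n |- _ => fail | _ =>
     assert (in_initTS (pcs C q) n) by (rewrite H; reflexivity) end
  end;
  repeat match goal with H : in_initTS (pcs ?C ?q) ?n |- _ =>
     lazymatch goal with _ : n < next_id C |- _ => fail | _ => pose proof (Hd _ _ H) end end.

Lemma Inv_step q C C' : Inv C -> step q C C' -> Inv C'.
Proof.
  intros (Ha & Hb & Hc & Hd) Hs.
  destruct Hs; try destruct k; unfold Inv; simpl in *; unfold upd; 
  repeat split; intros; eqbs; subst; simpl in *; try discriminate; try contradiction; try lia;
  try congruence;
  try (apply Ha; lia);
  try (match goal with H : vhead _ = Some _ |- _ => apply Hb in H end; lia);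
  try (match goal with H : in_initTS _ _ |- _ => apply Hd in H end; lia);
  try solve [eapply Hc; eauto].
  all: injs; try lia; itp Hd; try lia; try congruence; prep Hc; try (intro; injs); try lia; try congruence; eauto;
  try (match goal with H : vhead _ = Some _ |- _ => apply Hb in H end; lia);
  try (match goal with H : forall q' n, in_initTS (pcs _ q') n -> n <> ?m, H' : in_initTS (pcs _ _) ?m |- _ => exfalso; exact (H _ _ H' eq_refl) end).
  all: idtac.
  Qed.

Lemma valid_step q C C' n : Inv C -> ts_valid C n -> step q C C' -> ts_valid C' n.
Proof.
  intros (Ha & Hb & Hc & Hd) (nd0 & c0 & Hn & Ht) Hs.
  unfold ts_valid.
  destruct Hs; try destruct k; simpl; unfold upd; eqbs; subst; simpl;
    eauto; try congruence.
  all: try (assert (Hlt : n < next_id C) by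
           (destruct (Nat.lt_ge_cases n (next_id C)); auto; rewrite Ha in Hn; congruence); lia).
  all: try (match goal with H : pcs _ _ = VC_CAS _ _ |- _ =>
             destruct (Hc _ _ _ H) as (_ & _ & Hz & _); rewrite (Hz _ Hn) in Ht; discriminate end).
all: rewrite Ha in Hn; [discriminate|lia].
Qed.

Lemma complete_step q C C' p n : step q C C' -> in_initTS (pcs C p) n ->
  ~ in_initTS (pcs C' p) n -> ts_valid C' n.
Proof.
  intros Hs Hi Hn.
  destruct (Nat.eq_dec p q) as [->|Hne].
  2:{ exfalso. apply Hn. rewrite (pcs_other _ _ _ _ Hs Hne). exact Hi. }
  unfold ts_valid.
  destruct Hs; try destruct k; simpl in *; unfold upd in *; rewrite ?Nat.eqb_refl in *;
    simpl in *; match goal with H : pcs _ _ = _ |- _ => rewrite H in Hi end; simpl in Hi;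
    try contradiction; subst; eauto;
    try (exfalso; apply Hn; reflexivity);
    rewrite Nat.eqb_refl; eauto.
all: do 2 eexists; split; reflexivity.
Qed.

Theorem lemmaA2 (E : nat -> Config) (len : nat) :
  execution E len ->
  (* (1) when initTS is called on VNode n (and throughout that call),
         VHead has already contained a pointer to n *)
  (forall i p n, i <= len -> in_initTS (pcs (E i) p) n ->
     exists j, j <= i /\ vhead (E j) = Some n) /\
  (* (2) once a call initTS(n) by process p completes (step i -> i+1),
         n's timestamp is valid in every later configuration *)
  (forall i p n, i < len -> in_initTS (pcs (E i) p) n ->
     ~ in_initTS (pcs (E (S i)) p) n ->
     forall j, S i <= j -> j <= len -> ts_valid (E j) n).
Proof.
  intros [H0 Hst].
  assert (HI : forall i, i <= len -> Inv (E i)).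
  { induction i; intros Hi.
    - rewrite H0. apply Inv_init.
    - destruct (Hst i ltac:(lia)) as [q Hq]. eapply Inv_step; [apply IHi; lia| exact Hq]. }
  split.
  - induction i; intros p n Hi Hin.
    + rewrite H0 in Hin. simpl in Hin. contradiction.
    + destruct (Hst i ltac:(lia)) as [q Hq].
      destruct (init_src _ _ _ _ _ Hq Hin) as [A|[A|A]].
      * destruct (IHi p n ltac:(lia) A) as [j [Hj Hv]]. exists j; split; [lia|auto].
      * exists i; split; [lia|auto].
      * exists (S i); split; [lia|auto].
  - intros i p n Hi Hin Hout j.
    induction j; intros Hj1 Hj2.
    + lia.
    + destruct (Nat.eq_dec i j) as [->|Hne].
      * destruct (Hst j ltac:(lia)) as [q Hq]. eapply complete_step; eauto.
      * destruct (Hst j ltac:(lia)) as [q Hq]. apply (valid_step q (E j)); [apply HI; lia| apply IHj; lia | exact Hq].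
Qed.
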